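(* Let $G$ be a finite simple graph. The following are equivalent: (i) $G$ is a König–Egerváry graph; (ii) $\operatorname{diadem}(G) = \operatorname{corona}(G)$; (iii) $|\operatorname{diadem}(G)| + |\operatorname{nucleus}(G)| = 2\alpha(G)$.
   Context: For $X\subseteq V(G)$, $N(X)$ is the set of vertices adjacent to some vertex of $X$, and the difference of $X$ is $d(X)=|X|-|N(X)|$. A set $S\subseteq V(G)$ is independent if no two of its vertices are adjacent. An independent set $S$ is a critical independent set if $d(S)=\max\{d(X): X\subseteq V(G)\}$; the empty set may be critical. A maximum critical independent set is a critical independent set of maximum cardinality. $\operatorname{nucleus}(G)$ is the intersection of all maximum critical independent sets of $G$, and $\operatorname{diadem}(G)$ is their union. $\alpha(G)$ is the maximum size of an independent set, with $\alpha$ of the empty graph equal to $0$. $\operatorname{corona}(G)$ is the union of all maximum independent sets of $G$. $\mu(G)$ is the size of a maximum matching. $G$ is König–Egerváry if $\alpha(G)+\mu(G)=|V(G)|$; by convention the empty graph is König–Egerváry. *)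

(* Defs.v *)
From mathcomp Require Import all_boot all_order all_algebra.
Set Implicit Arguments. Unset Strict Implicit. Unset Printing Implicit Defensive.
Import GRing.Theory Num.Theory.

(* A finite simple graph: vertex type T : finType, adjacency e : rel T,
   assumed symmetric and irreflexive in the theorem. *)
Section Graph.
Variables (T : finType) (e : rel T).

Definition nbhd (X : {set T}) : {set T} := [set y | [exists x in X, e x y]].

Definition diff (X : {set T}) : int := (#|X|%:Z - #|nbhd X|%:Z)%R.

Definition independent (S : {set T}) : bool :=
  [forall x in S, forall y in S, ~~ e x y].

Definition critical_indep (S : {set T}) : bool :=
  independent S && [forall X : {set T}, (diff X <= diff S)%R].

Definition max_critical_indep (S : {set T}) : bool :=
  critical_indep S && [forall S' : {set T}, critical_indep S' ==> (#|S'| <= #|S|)%N].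

Definition nucleus : {set T} := \bigcap_(S : {set T} | max_critical_indep S) S.
Definition diadem : {set T} := \bigcup_(S : {set T} | max_critical_indep S) S.

Definition alpha : nat := \max_(S : {set T} | independent S) #|S|.

Definition max_indep (S : {set T}) : bool := independent S && (#|S| == alpha).

Definition corona : {set T} := \bigcup_(S : {set T} | max_indep S) S.

Definition matching (M : {set {set T}}) : bool :=
  [forall E in M, exists x, exists y, e x y && (E == [set x; y])] &&
  [forall E in M, forall F in M, (E != F) ==> [disjoint E & F]].

Definition mu : nat := \max_(M : {set {set T}} | matching M) #|M|.

Definition koenig_egervary : Prop := (alpha + mu = #|T|)%N.

End Graph.

(* Main.v *)
Require Import Defs.
From mathcomp Require Import all_boot all_order all_algebra zify.
Import GRing.Theory Num.Theory.
Set Implicit Arguments. Unset Strict Implicit.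

Ltac clean := repeat match goal with H : _ |- _ => clear H end.

Section Main.
Variables (T : finType) (e : rel T).
Hypothesis e_sym : symmetric e.
Hypothesis e_irr : irreflexive e.

Local Notation N := (nbhd e).

Lemma nbhdP (X : {set T}) y : reflect (exists2 x, x \in X & e x y) (y \in N X).
Proof. rewrite inE; exact: (iffP exists_inP) => -[x]; exists x. Qed.

Lemma nbhdS (X Y : {set T}) : X \subset Y -> N X \subset N Y.
Proof.
move=> sXY; apply/subsetP => y /nbhdP [x xX exy]; apply/nbhdP; exists x => //.
exact: (subsetP sXY).
Qed.

Lemma nbhdU (X Y : {set T}) : N (X :|: Y) = N X :|: N Y.
Proof.
apply/setP => y; rewrite in_setU; apply/nbhdP/orP.
  by case=> x; rewrite inE => /orP [] xX exy; [left|right]; apply/nbhdP; exists x.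
by case=> /nbhdP [x xX exy]; exists x; rewrite // inE xX ?orbT.
Qed.

Lemma cardUD (A B : {set T}) : [disjoint A & B] -> #|A :|: B| = #|A| + #|B|.
Proof. by move=> /disjoint_setI0 d; rewrite -cardsUI d cards0 addn0. Qed.

Lemma disjP (A B : {set T}) : (forall x, x \in A -> x \in B -> False) -> [disjoint A & B].
Proof.
move=> H; rewrite -setI_eq0; apply/eqP/setP => x; rewrite !inE.
by apply/negbTE/negP => /andP [xA xB]; apply: (H x).
Qed.

Lemma disjF (A B : {set T}) x : [disjoint A & B] -> x \in A -> x \in B -> False.
Proof.
by move=> /disjoint_setI0/setP/(_ x); rewrite in_setI in_set0 => H xA xB; rewrite xA xB in H.
Qed.

Lemma hall n (A B : {set T}) : #|A| <= n ->
  (forall X : {set T}, X \subset A -> #|X| <= #|N X :&: B|) ->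
  exists f : T -> T, {in A, forall x, f x \in B /\ e x (f x)} /\ {in A &, injective f}.
Proof.
elim: n A B => [|n IH] A B.
  rewrite leqn0 cards_eq0 => /eqP -> _; exists id; split; by move=> x; rewrite inE.
move=> cA hA; case: (leqP #|A| n) => [cAn|]; first exact: IH.
move=> ltA; have {cA ltA} cA : #|A| = n.+1 by apply/eqP; rewrite eqn_leq cA ltA.
case: (boolP [exists X : {set T}, [&& X \subset A, X != set0, X != A & #|N X :&: B| <= #|X|]]).
- case/existsP => X0 /and4P [sX0 nX0 X0A tX0].
  have pX0 : X0 \proper A by rewrite properEneq X0A.
  have c0 := proper_card pX0.
  have [f1 [f1B f1i]] : exists f : T -> T, {in X0, forall x, f x \in B /\ e x (f x)} /\ {in X0 &, injective f}.
    apply: (IH X0 B); first by rewrite -ltnS -cA.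
    by move=> X sX; apply: hA; apply: subset_trans sX0.
  have [f2 [f2B f2i]] : exists f : T -> T, {in A :\: X0, forall x, f x \in B :\: N X0 /\ e x (f x)} /\ {in A :\: X0 &, injective f}.
    apply: (IH _ (B :\: N X0)).
      have := cardsID X0 A; rewrite (setIidPr sX0).
      have : 0 < #|X0| by rewrite card_gt0.
      lia.
    move=> Y sY.
    have dY : [disjoint Y & X0].
      apply/disjP => x xY xX; have := subsetP sY x xY; by rewrite inE xX.
    have sYA : Y :|: X0 \subset A by rewrite subUset sX0 (subset_trans sY) ?subsetDl.
    have := hA _ sYA; rewrite cardUD // nbhdU.
    have : #|(N Y :|: N X0) :&: B| <= #|N Y :&: (B :\: N X0)| + #|N X0 :&: B|.
      rewrite -cardUD; last first.
        apply/disjP => x; rewrite !(in_setU, in_setI, in_setD) => /andP [_ /andP [/negbTE ->]] //.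
      apply: subset_leq_card; apply/subsetP => x; rewrite !(in_setU, in_setI, in_setD).
      by case: (x \in N X0); case: (x \in N Y); case: (x \in B).
    lia.
  exists (fun x => if x \in X0 then f1 x else f2 x); split.
    move=> x xA; case: ifP => xX; first exact: f1B.
    have xD : x \in A :\: X0 by rewrite inE xX xA.
    have [] := f2B x xD; rewrite inE => /andP [_ ->]; by [].
  move=> x y xA yA /=.
  case: ifP => xX; case: ifP => yX => Hf.
  + exact: f1i.
  + have yD : y \in A :\: X0 by rewrite inE yX yA.
    have [] := f2B y yD; rewrite inE -Hf => /andP [/negP H] _ _; exfalso; apply: H.
    apply/nbhdP; exists x => //; by case: (f1B x xX).
  + have xD : x \in A :\: X0 by rewrite inE xX xA.
    have [] := f2B x xD; rewrite inE Hf => /andP [/negP H] _ _; exfalso; apply: H.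
    apply/nbhdP; exists y => //; by case: (f1B y yX).
  + by apply: f2i => //; rewrite inE ?xX ?yX.
- rewrite negb_exists => /forallP nt.
  have : 0 < #|A| by rewrite cA.
  rewrite card_gt0 => /set0Pn [a aA].
  have : 0 < #|N [set a] :&: B|.
    apply: leq_trans (hA [set a] _); by rewrite ?cards1 ?sub1set.
  rewrite card_gt0 => /set0Pn [b]; rewrite inE => /andP [/nbhdP [a' ] ].
  rewrite inE => /eqP -> eab bB.
  have [f2 [f2B f2i]] : exists f : T -> T, {in A :\ a, forall x, f x \in B :\ b /\ e x (f x)} /\ {in A :\ a &, injective f}.
    apply: (IH _ (B :\ b)).
      have := cardsD1 a A; rewrite aA; lia.
    move=> Y sY.
    case: (eqVneq Y set0) => [-> | nY]; first by rewrite cards0.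
    have YA : Y != A.
      apply/eqP => YA; have := subsetP sY a; rewrite YA aA !inE eqxx => /(_ isT).
      by [].
    have sYA : Y \subset A by apply: subset_trans sY (subD1set _ _).
    have := nt Y; rewrite sYA nY YA /= -ltnNge => lt.
    rewrite setIDA.
    have := cardsD1 b (N Y :&: B).
    case: (b \in N Y :&: B); lia.
  exists (fun x => if x == a then b else f2 x); split.
    move=> x xA; case: eqP => [->|/eqP xa]; first by [].
    have xD : x \in A :\ a by rewrite !inE xa xA.
    have [] := f2B x xD; rewrite !inE => /andP [_ ->]; by [].
  move=> x y xA yA /=.
  case: eqP => [->|/eqP xa]; case: eqP => [->|/eqP ya] => // Hf.
  + have yD : y \in A :\ a by rewrite !inE ya yA.
    have [] := f2B y yD; rewrite !inE -Hf eqxx; by [].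
  + have xD : x \in A :\ a by rewrite !inE xa xA.
    have [] := f2B x xD; rewrite !inE Hf eqxx; by [].
  + by apply: f2i => //; rewrite !inE ?xa ?ya.
Qed.


Definition dle (X Y : {set T}) := #|X| + #|N Y| <= #|Y| + #|N X|.

Lemma dle_trans Y X Z : dle X Y -> dle Y Z -> dle X Z.
Proof. rewrite /dle; lia. Qed.

Lemma diff_leE (X Y : {set T}) : (diff e X <= diff e Y)%R = dle X Y.
Proof. rewrite /diff /dle; apply/idP/idP => H; lia. Qed.

Lemma critP (S : {set T}) : reflect (independent e S /\ forall X, dle X S) (critical_indep e S).
Proof.
rewrite /critical_indep; apply: (iffP andP) => -[iS H]; split => //.
  by move=> X; have /forallP := H; move=> /(_ X); rewrite diff_leE.
by apply/forallP => X; rewrite diff_leE; apply: H.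
Qed.

Lemma indepP (S : {set T}) : reflect {in S &, forall x y, ~~ e x y} (independent e S).
Proof.
apply: (iffP forall_inP) => [H x y xS yS | H x xS].
  by have /forall_inP := H x xS; apply.
by apply/forall_inP => y yS; apply: H.
Qed.

Lemma indep_notN (S : {set T}) x : independent e S -> x \in S -> x \notin N S.
Proof.
move=> /indepP iS xS; apply/negP => /nbhdP [y yS eyx].
by have := iS y x yS xS; rewrite eyx.
Qed.

Lemma indep_card (S : {set T}) : independent e S -> #|S| + #|N S| <= #|T|.
Proof.
move=> iS; rewrite -cardUD ?max_card //.
by apply/disjP => x xS xN; have := indep_notN iS xS; rewrite xN.
Qed.

Lemma reduce_indep (X : {set T}) : independent e (X :\: N X).
Proof.
apply/indepP => x y; rewrite !in_setD => /andP [_ xX] /andP [/negP yN _].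
apply/negP => exy; apply: yN; apply/nbhdP; by exists x.
Qed.

Lemma reduce_dle (X : {set T}) : dle X (X :\: N X).
Proof.
have s : N (X :\: N X) \subset N X :\: X.
  apply/subsetP => y /nbhdP [x]; rewrite in_setD => /andP [xN xX] exy.
  rewrite in_setD; apply/andP; split; last by apply/nbhdP; exists x.
  apply/negP => yX; move/negP: xN; apply; apply/nbhdP; exists y => //.
  by rewrite e_sym.
have := subset_leq_card s; have := cardsID X (N X); have := cardsID (N X) X.
rewrite setIC /dle; lia.
Qed.

Lemma exists_crit : exists S, critical_indep e S.
Proof.
pose m (X : {set T}) := #|X| + (#|T| - #|N X|).
case: (@arg_maxnP _ set0 xpredT m isT) => X0 _ H.
exists (X0 :\: N X0); apply/critP; split; first exact: reduce_indep.
move=> Y; apply: (dle_trans _ (reduce_dle X0)).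
have h3 : m Y <= m X0 := H Y isT.
have h1 : #|N Y| <= #|T| := max_card _.
have h2 : #|N X0| <= #|T| := max_card _.
move: h3; rewrite /m /dle; lia.
Qed.

Lemma exists_maxcrit : exists I, max_critical_indep e I.
Proof.
have [S0 cS0] := exists_crit.
case: (@arg_maxnP _ S0 (critical_indep e) (fun S => #|S|) cS0) => I cI H.
exists I; rewrite /max_critical_indep cI /=; apply/forallP => S; apply/implyP.
exact: H.
Qed.

Lemma maxcritP (I : {set T}) : max_critical_indep e I ->
  critical_indep e I /\ forall S, critical_indep e S -> #|S| <= #|I|.
Proof.
case/andP => cI /forallP H; split => // S cS; have := H S; by rewrite cS.
Qed.

Lemma hallcond (I X : {set T}) : critical_indep e I -> X \subset N I -> #|X| <= #|N X :&: I|.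
Proof.
move=> /critP [iI cI] sX.
pose I0 := I :\: N X.
have s : N I0 :|: X \subset N I.
  by rewrite subUset sX nbhdS ?subsetDl.
have d : [disjoint N I0 & X].
  apply/disjP => y /nbhdP [x]; rewrite in_setD => /andP [/negP xN xI] exy yX.
  apply: xN; apply/nbhdP; exists y => //; by rewrite e_sym.
have := subset_leq_card s; rewrite cardUD //.
have := cI I0; rewrite /dle.
have := cardsID (N X) I; rewrite setIC; rewrite /I0; lia.
Qed.

Lemma bound6 (I S : {set T}) : critical_indep e I -> independent e S ->
  #|S :&: (I :|: N I)| <= #|I|.
Proof.
move=> cI iS.
set X := S :&: N I.
have h := hallcond cI (subsetIr S (N I)).
have s1 : S :&: (I :|: N I) \subset (S :&: I) :|: X.
  by apply/subsetP => x; rewrite /X !inE; case: (x \in S).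
have s2 : N X :&: I \subset I :\: S.
  apply/subsetP => y; rewrite in_setI => /andP [yN yI]; rewrite in_setD yI andbT.
  apply/negP => yS; have : y \in N S by apply: (subsetP (nbhdS (subsetIl S (N I)))).
  by have := indep_notN iS yS => /negbTE ->.
have := subset_leq_card s1; have := subset_leq_card s2.
have := cardsUI (S :&: I) X; have := cardsID S I.
rewrite [I :&: S]setIC /X; lia.
Qed.


Lemma lemma7 (I J : {set T}) : max_critical_indep e I -> critical_indep e J ->
  J \subset I :|: N I.
Proof.
move=> /maxcritP [cI mI] cJ.
have /critP [iI dI] := cI; have /critP [iJ dJ] := cJ.
pose A := I :|: J.
have dA : forall Y, dle Y A.
  move=> Y; apply: (dle_trans (dJ Y)).
  have h1 := dI (I :&: J).
  have s : N (I :&: J) \subset N I :&: N J.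
    by rewrite subsetI !nbhdS ?subsetIl ?subsetIr.
  have := subset_leq_card s; have := cardsUI I J; have := cardsUI (N I) (N J).
  move: h1; rewrite /dle /A nbhdU; lia.
pose A' := A :\: N A.
have cA' : critical_indep e A'.
  apply/critP; split; first exact: reduce_indep.
  move=> Y; exact: dle_trans (dA Y) (reduce_dle A).
have /critP [_ dA'] := cA'.
pose X := J :\: (I :|: N I).
have XJ : X \subset J by apply: subsetDl.
have XI : [disjoint X & I :|: N I].
  by apply/disjP => x; rewrite in_setD => /andP [/negbTE ->].
have XA' : X \subset A'.
  apply/subsetP => x xX; have xJ := subsetP XJ x xX.
  rewrite in_setD /A in_setU xJ orbT andbT nbhdU in_setU negb_or.
  rewrite (indep_notN iJ xJ) andbT; apply/negP => xN.
  have := xX; rewrite in_setD in_setU xN orbT; by [].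
have A'IX : A' \subset (A' :&: I) :|: X.
  apply/subsetP => x; rewrite /A' /A in_setD nbhdU !in_setU negb_or.
  case/andP => /andP [xNI xNJ] /orP [xI|xJ].
    by rewrite in_setI in_setD !in_setU negb_or xNI xNJ xI.
  case xI : (x \in I).
    by rewrite in_setI in_setD !in_setU negb_or xNI xNJ xI.
  by rewrite /X in_setD !in_setU xI (negbTE xNI) xJ orbT.
pose I1 := A' :&: I.
pose NXh := N X :\: (I :|: N I).
have cardA' : #|A'| = #|I1| + #|X|.
  apply/eqP; rewrite eqn_leq; apply/andP; split.
    apply: leq_trans (subset_leq_card A'IX) (leq_card_setU _ _).
  rewrite -cardUD ?subset_leq_card // ?subUset ?subsetIl //.
  apply/disjP => x; rewrite in_setI => /andP [_ xI] xX.
  by apply: (disjF XI xX); rewrite in_setU xI.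
have hN : #|N I1| + #|NXh| <= #|N A'|.
  rewrite -cardUD; last first.
    apply/disjP => y yN; rewrite in_setD in_setU negb_or => /andP [/andP [_ /negP]] [].
    by apply: (subsetP (nbhdS (subsetIr A' I))).
  apply: subset_leq_card; rewrite subUset nbhdS ?subsetIl //.
  apply: subset_trans (subsetDl _ _) (nbhdS XA').
have hX : #|NXh| <= #|X|.
  move: hN; have := dA' I1; rewrite /dle cardA'; clean; lia.
pose K := I :|: X.
have iK : independent e K.
  apply/indepP => x y; rewrite !in_setU => /orP [xI|xX] /orP [yI|yX].
  - by apply: (indepP _ iI).
  - apply/negP => exy; apply: (disjF XI yX); rewrite in_setU; apply/orP; right.
    by apply/nbhdP; exists x.
  - apply/negP => exy; apply: (disjF XI xX); rewrite in_setU; apply/orP; right.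
    by apply/nbhdP; exists y => //; rewrite e_sym.
  - by apply: (indepP _ iJ); apply: (subsetP XJ).
have sNK : N K \subset N I :|: NXh.
  apply/subsetP => z; rewrite /K nbhdU in_setU => /orP [zNI|zNX]; first by rewrite in_setU zNI.
  rewrite in_setU; case zNI : (z \in N I) => //=.
  rewrite /NXh in_setD zNX andbT in_setU zNI orbF.
  apply/negP => zI; case/nbhdP: zNX => x xX exz.
  apply: (disjF XI xX); rewrite in_setU; apply/orP; right.
  by apply/nbhdP; exists z => //; rewrite e_sym.
have cK : #|K| = #|I| + #|X|.
  rewrite /K setUC cardUD; first by rewrite addnC.
  apply/disjP => x xX xI; apply: (disjF XI xX); by rewrite in_setU xI.
have critK : critical_indep e K.
  apply/critP; split => // Y; apply: (dle_trans (dI Y)).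
  move: hX; have := subset_leq_card sNK; have := cardsUI (N I) NXh.
  rewrite /dle cK; clean; lia.
have := mI K critK; rewrite cK.
have : (#|X| == 0) = (X == set0) by apply: cards_eq0.
rewrite /X setD_eq0 => h1 h2.
by rewrite -h1; move: h2; rewrite -{2}[#|I|]addn0 leq_add2l leqn0.
Qed.


Lemma indep0 : independent e set0.
Proof. by apply/indepP => x y; rewrite inE. Qed.

Lemma alpha_ex : exists2 S, independent e S & #|S| = alpha e.
Proof.
exists [arg max_(S > set0 | independent e S) #|S|].
  by case: arg_maxnP => //; exact: indep0.
by rewrite /alpha (bigmax_eq_arg _ indep0).
Qed.

Lemma alpha_ge (S : {set T}) : independent e S -> #|S| <= alpha e.
Proof. move=> iS; rewrite /alpha; exact: (@leq_bigmax_cond _ (independent e) (fun S : {set T} => #|S|) S iS). Qed.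

Lemma matching0 : matching e set0.
Proof. by apply/andP; split; apply/forall_inP => E; rewrite inE. Qed.

Lemma mu_ex : exists2 M, matching e M & #|M| = mu e.
Proof.
exists [arg max_(M > set0 | matching e M) #|M|].
  by case: arg_maxnP => //; exact: matching0.
by rewrite /mu (bigmax_eq_arg _ matching0).
Qed.

Lemma mu_ge (M : {set {set T}}) : matching e M -> #|M| <= mu e.
Proof. move=> mM; rewrite /mu; exact: (@leq_bigmax_cond _ (matching e) (fun M : {set {set T}} => #|M|) M mM). Qed.

Lemma matchingP (M : {set {set T}}) : matching e M ->
  (forall E, E \in M -> exists x y, e x y /\ E = [set x; y]) /\
  {in M &, forall E F : {set T}, E != F -> [disjoint E & F]}.
Proof.
case/andP => /forall_inP H1 /forall_inP H2; split.
  move=> E /H1 /existsP [x /existsP [y /andP [exy /eqP ->]]]; by exists x, y.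
move=> E F EM FM; have /forall_inP := H2 E EM; move/(_ F FM).
by move/implyP.
Qed.

Lemma card_cover_matching (M : {set {set T}}) : matching e M -> #|cover M| = 2 * #|M|.
Proof.
move=> /matchingP [H1 H2].
have tM : trivIset M by apply/trivIsetP.
have := (leq_card_cover M).2; rewrite tM => /eqP ->.
rewrite mulnC -sum_nat_const; apply: eq_bigr => E /H1 [x [y [exy ->]]].
rewrite cards2; case: eqP => // xy; by rewrite xy e_irr in exy.
Qed.

Lemma partner_ex (M : {set {set T}}) : matching e M -> exists p : T -> T,
  forall v, v \in cover M -> exists2 E, E \in M & [/\ v \in E, p v \in E & p v != v].
Proof.
move=> mM; have [H1 H2] := matchingP mM.
pose Q v u := [exists E in M, [&& v \in E, u \in E & u != v]].
pose p v := odflt v [pick u | Q v u].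
exists p.
move=> v /bigcupP [E EM vE].
rewrite /p /Q; case: pickP => [u /exists_inP [F FM /and3P [vF uF uv]]|none].
  by exists F.
exfalso; have [x [y [exy Exy]]] := H1 E EM.
have xy : x != y by apply/eqP => xy; rewrite xy e_irr in exy.
move: vE; rewrite Exy => /set2P [vx|vy].
  have := none y; move/negbT/negP; apply; apply/exists_inP; exists E => //.
  by rewrite Exy vx !inE !eqxx orbT /= eq_sym.
have := none x; move/negbT/negP; apply; apply/exists_inP; exists E => //.
by rewrite Exy vy !inE !eqxx /= orbT.
Qed.

Lemma two_elt (x y a b c : T) : a \in [set x; y] -> b \in [set x; y] ->
  c \in [set x; y] -> c != a -> c != b -> a = b.
Proof. by do 3 case/set2P => ->; rewrite ?eqxx. Qed.

Lemma dbound (X : {set T}) (M : {set {set T}}) : independent e X -> matching e M ->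
  #|X| + 2 * #|M| <= #|T| + #|N X|.
Proof.
move=> iX mM; have cC := card_cover_matching mM.
have [H1 H2] := matchingP mM.
pose C := cover M.
have [p pP] := partner_ex mM.
have pE : forall v, v \in C -> e v (p v).
  move=> v vC; have [E EM [vE pE pv]] := pP v vC.
  have [x [y [exy Exy]]] := H1 E EM.
  rewrite Exy in vE pE.
  case/set2P: vE => vx; case/set2P: pE => px; rewrite px vx.
  - by rewrite px vx eqxx in pv.
  - by [].
  - by rewrite e_sym.
  - by rewrite px vx eqxx in pv.
have pinj : {in C &, injective p}.
  move=> v w vC wC pvw.
  have [E EM [vE pvE pv]] := pP v vC; have [F FM [wF pF pw]] := pP w wC.
  have EF : E = F.
    apply/eqP; apply/negP => /negP EF.
    by apply: (disjF (H2 E F EM FM EF) pvE); rewrite pvw.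
  subst F; have [x [y [exy Exy]]] := H1 E EM.
  rewrite -pvw in pw; rewrite Exy in vE wF pvE.
  exact: (two_elt vE wF pvE).
have s : p @: (X :&: C) \subset N X.
  apply/subsetP => u /imsetP [v]; rewrite in_setI => /andP [vX vC] ->.
  by apply/nbhdP; exists v => //; apply: pE.
have c1 : #|p @: (X :&: C)| = #|X :&: C|.
  apply: card_in_imset => v w; rewrite !in_setI => /andP [_ vC] /andP [_ wC].
  exact: pinj.
have c2 : #|X :\: C| <= #|~: C|.
  by apply: subset_leq_card; apply/subsetP => v; rewrite in_setD in_setC => /andP [].
have := subset_leq_card s; have := cardsID C X; have := cardsC C.
rewrite /C in c1 c2 * => h1 h2 h3; rewrite -cC; lia.
Qed.


Section Fixed.
Variable I : {set T}.
Hypothesis mcI : max_critical_indep e I.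
Variable f : T -> T.
Hypothesis fB : {in N I, forall x, f x \in I /\ e x (f x)}.
Hypothesis finj : {in N I &, injective f}.

Local Notation P := (N I).
Local Notation fP := (f @: N I).
Local Notation U := (I :\: f @: N I).

Let cI : critical_indep e I. Proof. by case/maxcritP: mcI. Qed.
Let mI : forall S, critical_indep e S -> #|S| <= #|I|. Proof. by case/maxcritP: mcI. Qed.
Let iI : independent e I. Proof. by case/critP: cI. Qed.

Lemma fP_sub : fP \subset I.
Proof. by apply/subsetP => y /imsetP [x xP ->]; case: (fB xP). Qed.

Lemma card_fP : #|fP| = #|P|.
Proof. exact: card_in_imset. Qed.

Lemma card_U : #|U| + #|P| = #|I|.
Proof.
have := cardsID fP I; rewrite (setIidPr fP_sub) card_fP; lia.
Qed.

Lemma disjIP : [disjoint I & P].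
Proof. by apply/disjP => x xI xP; have := indep_notN iI xI; rewrite xP. Qed.

Lemma maxcrit_struct (J : {set T}) : max_critical_indep e J ->
  [/\ J \subset I :|: P, #|J| = #|I|, independent e J, U \subset J &
      forall x, x \in P -> (x \in J) || (f x \in J)].
Proof.
move=> mcJ; have [cJ mJ] := maxcritP mcJ; have /critP [iJ _] := cJ.
have sJ := lemma7 mcI cJ.
have cJI : #|J| = #|I| by apply/eqP; rewrite eqn_leq mI // mJ.
have s1 : J \subset (J :&: P) :|: ((J :&: U) :|: (J :&: fP)).
  apply/subsetP => x xJ; have := subsetP sJ x xJ.
  rewrite !in_setU !in_setI !in_setD xJ /=.
  by case: (x \in P); case: (x \in fP); rewrite ?orbT ?orbF //= andbT => ->.
have s2 : J :&: fP \subset f @: (P :\: J).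
  apply/subsetP => y; rewrite in_setI => /andP [yJ /imsetP [x xP yx]].
  apply/imsetP; exists x => //; rewrite in_setD xP andbT; apply/negP => xJ.
  have [_ exy] := fB xP; have := indepP _ iJ x y xJ yJ; by rewrite yx exy.
have c2 := leq_imset_card f (P :\: J).
have c3 := cardsID J P.
have c4 : #|J :&: U| <= #|U| by apply: subset_leq_card; apply: subsetIr.
have c5 := subset_leq_card s1.
have c6 := cardsUI (J :&: P) ((J :&: U) :|: (J :&: fP)).
have c7 := cardsUI (J :&: U) (J :&: fP).
have c8 := subset_leq_card s2.
have cu := card_U.
have eq1 : #|J :&: U| = #|U|.
  move: c2 c3 c4 c5 c6 c7 c8 cu cJI; rewrite [P :&: J]setIC; clean; lia.
have eq2 : #|J :&: fP| = #|f @: (P :\: J)|.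
  move: c2 c3 c4 c5 c6 c7 c8 cu cJI; rewrite [P :&: J]setIC; clean; lia.
split => //.
  have := (subset_leqif_cards (subsetIr J U)).2; rewrite eq1 eqxx => /esym /eqP <-.
  exact: subsetIl.
move=> x xP; case xJ : (x \in J) => //=.
have := (subset_leqif_cards s2).2; rewrite eq2 eqxx => /esym /eqP e2.
have : f x \in f @: (P :\: J) by apply/imsetP; exists x; rewrite // in_setD xJ xP.
by rewrite -e2 in_setI => /andP [].
Qed.

Lemma notC v : v \notin nucleus e -> exists2 J, max_critical_indep e J & v \notin J.
Proof.
move=> vC; case: (boolP [exists J, max_critical_indep e J && (v \notin J)]).
  by case/existsP => J /andP [] ?; exists J.
rewrite negb_exists => /forallP H; move/negP: vC; case; apply/bigcapP => J mJ.
by have := H J; rewrite mJ /= negbK.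
Qed.

Lemma DP x : x \in P -> (x \in diadem e) = (f x \notin nucleus e).
Proof.
move=> xP; apply/bigcupP/idP.
  case=> J mJ xJ; apply/negP => /bigcapP /(_ J mJ) fJ.
  have [_ _ iJ _ _] := maxcrit_struct mJ; have [_ exf] := fB xP.
  by have := indepP _ iJ x (f x) xJ fJ; rewrite exf.
move=> /notC [J mJ fJ]; exists J => //.
have [_ _ _ _ H] := maxcrit_struct mJ; have := H x xP; by rewrite (negbTE fJ) orbF.
Qed.

Lemma fDP x : x \in P -> (f x \in diadem e) = (x \notin nucleus e).
Proof.
move=> xP; apply/bigcupP/idP.
  case=> J mJ fJ; apply/negP => /bigcapP /(_ J mJ) xJ.
  have [_ _ iJ _ _] := maxcrit_struct mJ; have [_ exf] := fB xP.
  by have := indepP _ iJ x (f x) xJ fJ; rewrite exf.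
move=> /notC [J mJ xJ]; exists J => //.
have [_ _ _ _ H] := maxcrit_struct mJ; have := H x xP; by rewrite (negbTE xJ).
Qed.

Lemma UC : U \subset nucleus e.
Proof.
apply/subsetP => v vU; apply/bigcapP => J mJ.
have [_ _ _ sU _] := maxcrit_struct mJ; exact: (subsetP sU).
Qed.

Lemma CD : nucleus e \subset diadem e.
Proof. apply/subsetP => v /bigcapP /(_ I mcI) vI; apply/bigcupP; by exists I. Qed.

Lemma DIP : diadem e \subset I :|: P.
Proof.
apply/subsetP => v /bigcupP [J mJ vJ].
have [sJ _ _ _ _] := maxcrit_struct mJ; exact: (subsetP sJ).
Qed.

Lemma card_split (X : {set T}) : X \subset I :|: P ->
  #|X| = #|X :&: P| + #|X :&: fP| + #|X :&: U|.
Proof.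
move=> sX.
have e1 : X :\: P = X :&: I.
  apply/setP => v; rewrite in_setD in_setI.
  case vX : (v \in X); rewrite ?andbF //= andbT.
  have := subsetP sX v vX; rewrite in_setU.
  case vI : (v \in I); case vP : (v \in P) => //=.
  by have := disjF disjIP vI vP.
have e2 : X :&: I :&: fP = X :&: fP by rewrite -setIA (setIidPr fP_sub).
have e3 : X :&: I :\: fP = X :&: U by rewrite setIDA.
have := cardsID P X; have := cardsID fP (X :&: I); rewrite e1 e2 e3.
clean; lia.
Qed.

Lemma img_D : f @: (diadem e :&: P) = fP :\: nucleus e.
Proof.
apply/eqP; rewrite eqEsubset; apply/andP; split; apply/subsetP => y.
  case/imsetP => x; rewrite in_setI => /andP [xD xP] ->.
  by rewrite in_setD -DP // xD; apply/imsetP; exists x.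
rewrite in_setD => /andP [yC /imsetP [x xP yx]].
by apply/imsetP; exists x => //; rewrite in_setI xP DP // -yx yC.
Qed.

Lemma img_C : f @: (nucleus e :&: P) = fP :\: diadem e.
Proof.
apply/eqP; rewrite eqEsubset; apply/andP; split; apply/subsetP => y.
  case/imsetP => x; rewrite in_setI => /andP [xC xP] ->.
  by rewrite in_setD fDP // xC /=; apply/imsetP; exists x.
rewrite in_setD => /andP [yD /imsetP [x xP yx]].
apply/imsetP; exists x => //; rewrite in_setI xP andbT.
by move: yD; rewrite yx fDP // negbK.
Qed.

Lemma FA : #|diadem e| + #|nucleus e| = 2 * #|I|.
Proof.
have sD := DIP; have sC := subset_trans CD DIP.
have k1 := card_split sD; have k2 := card_split sC.
have u1 : #|diadem e :&: U| = #|U|.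
  by rewrite (setIidPr (subset_trans UC CD)).
have u2 : #|nucleus e :&: U| = #|U| by rewrite (setIidPr UC).
have i1 : #|f @: (diadem e :&: P)| = #|diadem e :&: P|.
  apply: card_in_imset => x y; rewrite !in_setI => /andP [_ xP] /andP [_ yP].
  exact: finj.
have i2 : #|f @: (nucleus e :&: P)| = #|nucleus e :&: P|.
  apply: card_in_imset => x y; rewrite !in_setI => /andP [_ xP] /andP [_ yP].
  exact: finj.
rewrite img_D in i1; rewrite img_C in i2.
have c1 := cardsID (nucleus e) fP; have c2 := cardsID (diadem e) fP.
rewrite [fP :&: nucleus e]setIC [fP :&: diadem e]setIC in c1 c2.
have cu := card_U; have cf := card_fP.
move: k1 k2 u1 u2 i1 i2 c1 c2 cu cf; clean; lia.
Qed.

Lemma alpha_I : #|I| <= alpha e.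
Proof. exact: alpha_ge. Qed.

Lemma cov_alpha : I :|: P = setT -> alpha e = #|I|.
Proof.
move=> cov; apply/eqP; rewrite eqn_leq alpha_I andbT.
have [S iS <-] := alpha_ex.
by have := bound6 cI iS; rewrite cov setIT.
Qed.

Lemma ncov_alpha : I :|: P != setT -> #|I| < alpha e.
Proof.
move=> ncov; have [v vn] : exists v, v \notin I :|: P.
  case: (boolP [exists v, v \notin I :|: P]) => [/existsP [v] vn|]; first by exists v.
  rewrite negb_exists => /forallP H; move/negP: ncov; case; apply/eqP/setP => v.
  by have := H v; rewrite negbK in_setT => ->.
move: vn; rewrite in_setU negb_or => /andP [vI vP].
have iK : independent e (v |: I).
  apply/indepP => x y; rewrite !in_setU1 => /orP [/eqP ->|xI] /orP [/eqP ->|yI].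
  - by rewrite e_irr.
  - by apply/negP => evy; move/negP: vP; apply; apply/nbhdP; exists y => //; rewrite e_sym.
  - by apply/negP => exv; move/negP: vP; apply; apply/nbhdP; exists x.
  - by apply: (indepP _ iI).
by have := alpha_ge iK; rewrite cardsU1 vI.
Qed.

Definition Mf := [set [set x; f x] | x in P].

Lemma matching_Mf : matching e Mf.
Proof.
apply/andP; split; apply/forall_inP.
  move=> E /imsetP [x xP ->]; apply/existsP; exists x; apply/existsP; exists (f x).
  by rewrite eqxx andbT; case: (fB xP).
move=> E /imsetP [x xP ->]; apply/forall_inP => F /imsetP [y yP ->].
apply/implyP => neq; apply/disjP => z.
have [fxI _] := fB xP; have [fyI _] := fB yP.
have xy : x != y by apply: contraNneq neq => ->.
have fxy : f x != f y by apply: contraNneq xy => fe; apply/eqP; exact: finj xP yP fe.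
rewrite !inE => /orP [/eqP ->|/eqP ->] /orP [/eqP|/eqP] => //.
- by move=> exy; rewrite exy eqxx in xy.
- by move=> xfy; have := disjF disjIP fyI; rewrite -xfy; apply.
- by move=> fxy'; have := disjF disjIP fxI; rewrite fxy'; apply.
- by move=> ff; rewrite ff eqxx in fxy.
Qed.

Lemma card_Mf : #|Mf| = #|P|.
Proof.
apply: card_in_imset => x y xP yP /setP /(_ x); rewrite !inE eqxx /=.
move/esym => /orP [/eqP //|/eqP xfy].
have [fyI _] := fB yP; by have := disjF disjIP fyI; rewrite -xfy; move/(_ xP).
Qed.

Lemma card_cov : I :|: P = setT -> #|T| = #|I| + #|P|.
Proof. by move=> cov; rewrite -cardUD ?disjIP // cov cardsT. Qed.

Lemma cov_KE : I :|: P = setT -> koenig_egervary e.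
Proof.
move=> cov; rewrite /koenig_egervary (cov_alpha cov).
have h1 := mu_ge matching_Mf; rewrite card_Mf in h1.
have [M mM cM] := mu_ex.
have := dbound iI mM; rewrite cM (card_cov cov).
move: h1; clean; lia.
Qed.

Lemma KE_alpha : koenig_egervary e -> alpha e <= #|I|.
Proof.
rewrite /koenig_egervary => ke.
have [S iS cS] := alpha_ex.
have [M mM cM] := mu_ex.
have cSc : critical_indep e S.
  apply/critP; split => // Y.
  apply: (dle_trans (reduce_dle Y)).
  have := dbound (reduce_indep Y) mM; have := indep_card iS.
  rewrite /dle cS cM; move: ke; clean; lia.
by rewrite -cS; apply: mI.
Qed.

Lemma KE_cov : koenig_egervary e -> I :|: P = setT.
Proof.
move=> ke; have := KE_alpha ke.
case: (eqVneq (I :|: P) setT) => // /ncov_alpha; lia.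
Qed.

Lemma cov_corona : I :|: P = setT -> diadem e = corona e.
Proof.
move=> cov; have ca := cov_alpha cov; have cn := card_cov cov.
rewrite /diadem /corona; apply: eq_bigl => S.
apply/idP/idP.
  move=> mS; have [cS mSS] := maxcritP mS; have /critP [iS _] := cS.
  rewrite /max_indep iS /= ca eqn_leq -{1}ca alpha_ge //=.
  exact: mSS cI.
case/andP => iS /eqP cS.
have /critP [_ dI] := cI.
have cSc : critical_indep e S.
  apply/critP; split => // Y; apply: (dle_trans (dI Y)).
  have := indep_card iS; rewrite /dle cS ca cn; clean; lia.
rewrite /max_critical_indep cSc /=; apply/forallP => S'; apply/implyP => /critP [iS' _].
by rewrite cS; apply: alpha_ge.
Qed.

Lemma ncov_corona : I :|: P != setT -> diadem e != corona e.
Proof.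
move=> ncov; have lt := ncov_alpha ncov.
have [S iS cS] := alpha_ex.
have [v vS vn] : exists2 v, v \in S & v \notin I :|: P.
  case: (boolP (S \subset I :|: P)) => [sS|].
    by have := bound6 cI iS; rewrite (setIidPl sS) cS; lia.
  by case/subsetPn => v vS vn; exists v.
apply/negP => /eqP DC.
have : v \in corona e by apply/bigcupP; exists S => //; rewrite /max_indep iS cS eqxx.
rewrite -DC => vD; move/negP: vn; apply; exact: (subsetP DIP).
Qed.

End Fixed.

End Main.

Theorem theorem1p6 (T : finType) (e : rel T)
  (e_sym : symmetric e) (e_irr : irreflexive e) :
  (koenig_egervary e <-> diadem e = corona e) /\
  (koenig_egervary e <-> (#|diadem e| + #|nucleus e| = 2 * alpha e)%N).
Proof.
have [I mcI] := exists_maxcrit e_sym.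
have [cI _] := maxcritP mcI.
have [f [fB finj]] := hall (leqnn #|nbhd e I|) (fun X sX => hallcond e_sym cI sX).
have fa := FA e_sym mcI fB finj.
case: (eqVneq (I :|: nbhd e I) setT) => cov.
  have ke := cov_KE e_sym e_irr mcI fB finj cov.
  have dc := cov_corona e_sym mcI cov.
  have ca := cov_alpha e_sym mcI cov.
  by split; split => _ //; rewrite fa ca.
have nke : ~ koenig_egervary e.
  by move=> ke; move/eqP: cov; apply; apply: (KE_cov e_sym e_irr mcI ke).
have lt := ncov_alpha e_sym e_irr mcI cov.
have ndc := ncov_corona e_sym e_irr mcI fB finj cov.
split; split => // H; exfalso.
  by move/eqP: ndc; apply.
by move: H; rewrite fa; lia.
Qed.
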